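(* Let $d\ge 3$ and let $A=\lambda B+(1-\lambda)B'$ with $0<\lambda<1$, where $B,B'$ are $d$-dimensional $(0,1)$-matrices of order $4$ each equivalent to $\mathcal{M}_4^d$. If the tessellation index of $A$ (with respect to $B,B'$) is $-\infty$, i.e. no filled subcube of $B$ intersects any filled subcube of $B'$, then $\operatorname{per}A>0$.
   Context: $\mathcal{M}_4^d$ has entry $1$ at $\alpha$ iff $\alpha_1+\dots+\alpha_d\equiv0\pmod 4$. Equivalence: permuting coordinate positions and/or applying a permutation of $\{0,1,2,3\}$ to a single coordinate, repeatedly. A diagonal is a set of $4$ indices any two of which differ in every coordinate; $\operatorname{per}A=\sum_p\prod_{\alpha\in p}a_\alpha$ over diagonals. Define $p_1,p_2,p_3:\{0,1,2,3\}\to\{0,1\}$ by $p_1(0)=p_1(1)=0,\ p_1(2)=p_1(3)=1$; $p_2(0)=p_2(2)=0,\ p_2(1)=p_2(3)=1$; $p_3(0)=p_3(3)=0,\ p_3(1)=p_3(2)=1$; and $\mu_1(0)=\mu_1(2)=0,\ \mu_1(1)=\mu_1(3)=1$; $\mu_2(0)=\mu_2(1)=0,\ \mu_2(2)=\mu_2(3)=1$; $\mu_3(0)=\mu_3(2)=0,\ \mu_3(1)=\mu_3(3)=1$. $Q_s^d=\{y\in\{0,1\}^d:w(y)\equiv s\pmod 2\}$ ($w$ = Hamming weight). For $\mathcal{E}\in\{1,2,3\}^d$, $s\in\{0,1\}$, $\lambda:Q_s^d\to\{0,1\}$, the block permutation with parameters $(\mathcal{E},\lambda,s)$ is the $(0,1)$-matrix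 with entry $1$ at $\alpha$ iff $\bigoplus_i p_{\varepsilon_i}(\alpha_i)=s$ and $\bigoplus_i\mu_{\varepsilon_i}(\alpha_i)\oplus\lambda(p_{\varepsilon_1}(\alpha_1),\dots,p_{\varepsilon_d}(\alpha_d))=0$. Every matrix equivalent to $\mathcal{M}_4^d$ ($d\ge3$) is a block permutation for a unique parameter triple; relative to these, its subcubes are $C_y=\{\alpha:p_{\varepsilon_i}(\alpha_i)=y_i\ \forall i\}$ and $C_y$ is filled if $w(y)\equiv s\pmod 2$. The intersection of a subcube of $B$ with a subcube of $B'$ is either empty or a product set of size $2^j$; the tessellation index of $\lambda B+(1-\lambda)B'$ is the maximum of such $j$ over pairs (filled subcube of $B$, filled subcube of $B'$) with nonempty intersection, and $-\infty$ if all such intersections are empty. *)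

(* Defs.v *)
From HB Require Import structures.
From mathcomp Require Import all_boot all_order all_fingroup all_algebra.
Set Implicit Arguments. Unset Strict Implicit. Unset Printing Implicit Defensive.
Import Order.TTheory GRing.Theory Num.Theory.

Definition idx (d : nat) := {ffun 'I_d -> 'I_4}.

Section Defs.
Variable R : realFieldType.
Local Open Scope ring_scope.

Definition M4 (d : nat) (a : idx d) : R :=
  if ((\sum_(i < d) (a i : nat)) %% 4 == 0)%N then 1 else 0.

Definition permute_coords d (s : 'S_d) (a : idx d) : idx d := [ffun i => a (s i)].
Definition permute_value d (i : 'I_d) (t : 'S_4) (a : idx d) : idx d :=
  [ffun j => if j == i then t (a j) else a j].

Inductive equivalent d (B : idx d -> R) : (idx d -> R) -> Prop :=
| equiv_refl C : (forall a, C a = B a) -> equivalent B C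
| equiv_coords C C' (s : 'S_d) :
    equivalent B C -> (forall a, C' a = C (permute_coords s a)) -> equivalent B C'
| equiv_value C C' (i : 'I_d) (t : 'S_4) :
    equivalent B C -> (forall a, C' a = C (permute_value i t a)) -> equivalent B C'.

Definition is_diagonal d (D : {set idx d}) : bool :=
  (#|D| == 4)%N &&
  [forall a in D, forall b in D, (a != b) ==> [forall i, a i != b i]].

Definition per d (A : idx d -> R) : R :=
  \sum_(D : {set idx d} | is_diagonal D) \prod_(a in D) A a.
End Defs.

(* p_1, p_2, p_3 and mu_1, mu_2, mu_3.  The parameter eps in {1,2,3} is
   encoded as e : 'I_3 with eps = e + 1. *)
Definition pmap (e : 'I_3) (x : 'I_4) : bool :=
  match val e, val x with
  | 0, _ => (2 <= x)%N
  | 1, _ => odd x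
  | _, _ => (x == 1 :> nat) || (x == 2 :> nat)
  end.

Definition mumap (e : 'I_3) (x : 'I_4) : bool :=
  match val e with
  | 0 => odd x
  | 1 => (2 <= x)%N
  | _ => odd x
  end.

Definition weight d (y : {ffun 'I_d -> bool}) : nat := \sum_(i < d) (y i : nat).

Definition pvec d (E : {ffun 'I_d -> 'I_3}) (a : idx d) : {ffun 'I_d -> bool} :=
  [ffun i => pmap (E i) (a i)].

(* Block permutation with parameters (E, lam, s).  lam is given as a total
   function on {0,1}^d; only its values on Q_s^d are ever used (the first
   condition forces pvec E a \in Q_s^d). *)
Definition block_perm (R : realFieldType) d (E : {ffun 'I_d -> 'I_3})
    (lam : {ffun 'I_d -> bool} -> bool) (s : bool) (a : idx d) : R :=
  if ((\big[addb/false]_(i < d) pmap (E i) ((a : idx d) i)) == s) &&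
     ((\big[addb/false]_(i < d) mumap (E i) (a i)) (+) lam (pvec E a) == false)
  then 1%R else 0%R.

Definition subcube d (E : {ffun 'I_d -> 'I_3}) (y : {ffun 'I_d -> bool}) : {set idx d} :=
  [set a : idx d | [forall i, pmap (E i) (a i) == y i]].

Definition filled d (s : bool) (y : {ffun 'I_d -> bool}) : bool :=
  odd (weight y) == s.

(* Main.v *)
Require Import Defs.
From HB Require Import structures.
From mathcomp Require Import all_boot all_order all_fingroup all_algebra.
Import Order.TTheory GRing.Theory Num.Theory.
Require Import Defs.
Set Implicit Arguments. Unset Strict Implicit. Unset Printing Implicit Defensive.

Definition decd (e : 'I_3) (y m : bool) : 'I_4 :=
  inord (match val e with 0 => 2 * y + m | 1 => 2 * m + y
        | _ => if y then (if m then 1 else 2) else (if m then 3 else 0) end).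

Lemma dec_p e y m : pmap e (decd e y m) = y.
Proof. by case: e => [[|[|[|?]]] ?] //; case: y; case: m; rewrite /pmap /decd /= inordK. Qed.
Lemma dec_mu e y m : mumap e (decd e y m) = m.
Proof. by case: e => [[|[|[|?]]] ?] //; case: y; case: m; rewrite /mumap /decd /= inordK. Qed.

Lemma xor_split d (f g : 'I_d -> bool) :
  \big[addb/false]_(i < d) (f i (+) g i) = (\big[addb/false]_(i < d) f i) (+) (\big[addb/false]_(i < d) g i).
Proof. by rewrite big_split. Qed.

Lemma xor_true d : \big[addb/false]_(i < d) true = odd d.
Proof. elim: d => [|d IH]; first by rewrite big_ord0. by rewrite big_ord_recr /= IH addbT. Qed.

Lemma xor_one d (j : 'I_d) x : \big[addb/false]_(i < d) ((i == j) && x) = x.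
Proof. rewrite (bigD1 j) //= eqxx big1 ?addbF // => i /negbTE ->. by []. Qed.

Lemma odd_weight d (y : {ffun 'I_d -> bool}) : odd (weight y) = \big[addb/false]_(i < d) y i.
Proof. rewrite /weight; elim/big_rec2: _ => // i x b _ <-. by rewrite oddD; case: (y i). Qed.


Definition negv d (y : {ffun 'I_d -> bool}) : {ffun 'I_d -> bool} := [ffun i => ~~ y i].

Definition pick4 (T : Type) (x0 x1 x2 x3 : T) (k : 'I_4) : T :=
  match val k with 0 => x0 | 1 => x1 | 2 => x2 | _ => x3 end.

Lemma config d (E : {ffun 'I_d -> 'I_3}) (c : {ffun 'I_d -> bool} -> bool)
  (y0 y2 : {ffun 'I_d -> bool}) (j l : 'I_d) :
  y0 j = y2 j -> y0 l != y2 l ->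
  ~~ (addb (addb (addb (c y0) (c (negv y0))) (c y2)) (c (negv y2))) ->
  exists F : 'I_4 -> idx d,
    (forall k k', k != k' -> forall i, F k i != F k' i) /\
    (forall k, \big[addb/false]_(i < d) mumap (E i) (F k i) = c (pvec E (F k))).
Proof.
move=> Sj Sl hc.
have hsum : c (negv y0) = addb (addb (c y0) (c y2)) (c (negv y2)).
  by move: hc; case: (c y0); case: (c (negv y0)); case: (c y2); case: (c (negv y2)).
have jl : j != l by apply: contraNneq Sl => <-; rewrite Sj.
set t0 := c y0; set t1 := c (negv y0); set t2 := c y2; set t3 := c (negv y2).
pose S i := y0 i == y2 i.
pose bj := t3 (+) odd d. pose bl := t2 (+) odd d (+) t0.
pose a : {ffun 'I_d -> bool} := [ffun i => (i == j) && t0].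
pose b : {ffun 'I_d -> bool} := [ffun i => ((i == j) && bj) (+) ((i == l) && bl)].
pose m2 : {ffun 'I_d -> bool} := [ffun i => if S i then ~~ a i else ~~ b i].
pose m3 : {ffun 'I_d -> bool} := [ffun i => if S i then ~~ b i else ~~ a i].
pose Y := pick4 y0 (negv y0) y2 (negv y2).
pose M := pick4 a b m2 m3.
exists (fun k => [ffun i => decd (E i) (Y k i) (M k i)]).
have pv k : pvec E [ffun i => decd (E i) (Y k i) (M k i)] = Y k.
  by apply/ffunP => i; rewrite !ffunE dec_p.
split.
  move=> k k' kk' i; rewrite !ffunE; apply/eqP => h.
  have hp := congr1 (pmap (E i)) h; have hm := congr1 (mumap (E i)) h.
  rewrite !dec_p in hp; rewrite !dec_mu in hm.
  move: kk' hp hm; clear h; rewrite /Y /M /pick4 /m2 /m3 /S /negv.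
  case: k => [[|[|[|[|?]]]] ?] //; case: k' => [[|[|[|[|?]]]] ?] //= _; rewrite ?ffunE;
  move: ((i == j) && t0) ((i == j) && bj (+) (i == l) && bl) => A Bb;
  by case: (y0 i); case: (y2 i); case: A; case: Bb.
have Sjt : S j by rewrite /S Sj.
have Slf : S l = false by apply/negbTE.
have e1 : forall i, a i = (i == j) && t0 by move=> i; rewrite ffunE.
have e2 : forall i, b i = ((i == j) && bj) (+) ((i == l) && bl) by move=> i; rewrite ffunE.
have e3 : forall i, m2 i = true (+) ((i == j) && t0) (+) ((i == l) && bl).
  move=> i; rewrite ffunE e1 e2; case: (eqVneq i j) => [->|nij]; first by rewrite Sjt (negbTE jl) /= ?addbF ?addTb.
  case: (eqVneq i l) => [->|nil]; first by rewrite Slf /= ?addbF ?addFb.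
  by case: (S i).
have e4 : forall i, m3 i = true (+) ((i == j) && bj).
  move=> i; rewrite ffunE e1 e2; case: (eqVneq i j) => [->|nij]; first by rewrite Sjt (negbTE jl) /= ?addbF ?addTb.
  case: (eqVneq i l) => [->|nil]; first by rewrite Slf /= ?addbF.
  by case: (S i).
move=> k; rewrite pv.
have -> : \big[addb/false]_(i < d) mumap (E i) ([ffun i => decd (E i) (Y k i) (M k i)] i)
   = \big[addb/false]_(i < d) M k i by apply: eq_bigr => i _; rewrite ffunE dec_mu.
case: k => [[|[|[|[|?]]]] ?] //=; rewrite /Y /M /pick4 /=.
- by under eq_bigr do rewrite e1; rewrite xor_one.
- under eq_bigr do rewrite e2; rewrite xor_split !xor_one hsum /bj /bl.
  rewrite /t0 /t2 /t3; by move: (c y0) (c y2) (c (negv y2)) (odd d) => [] [] [] [].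
- under eq_bigr do rewrite e3; rewrite !xor_split xor_true !xor_one /bl.
  rewrite /t0 /t2; by move: (c y0) (c y2) (odd d) => [] [] [].
- under eq_bigr do rewrite e4; rewrite !xor_split xor_true !xor_one /bj.
  rewrite /t3; by move: (c (negv y2)) (odd d) => [] [].
Qed.

Section PP.

Lemma choose_x e e' s s' : (e != e') || (s == s') -> exists x, pmap e x = s /\ pmap e' x = s'.
Proof.
case: e => [[|[|[|?]]] ?] //; case: e' => [[|[|[|?]]] ?] //; case: s; case: s' => // _;
first [ by exists (inord 0); rewrite /pmap /= inordK
      | by exists (inord 1); rewrite /pmap /= inordK
      | by exists (inord 2); rewrite /pmap /= inordK
      | by exists (inord 3); rewrite /pmap /= inordK ].
Qed.

Lemma pmap0 e : pmap e ord0 = false.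
Proof. by case: e => [[|[|[|?]]] ?]. Qed.

Local Open Scope ring_scope.
Lemma per_pos (R : realFieldType) d (A : idx d -> R) (F : 'I_4 -> idx d) : (0 < d)%N ->
  (forall k k', k != k' -> forall i, F k i != F k' i) -> (forall a, 0 <= A a) ->
  (forall k, 0 < A (F k)) -> 0 < per A.
Proof.
move=> d0 hF hA hAF.
have injF : injective F.
  move=> k k' e; apply/eqP/negPn/negP => ne.
  by move: (hF _ _ ne (Ordinal d0)); rewrite e eqxx.
pose D0 := [set F k | k : 'I_4].
have hD : is_diagonal D0.
  rewrite /is_diagonal card_imset // card_ord eqxx /=.
  apply/forall_inP => a /imsetP [k _ ->]; apply/forall_inP => b /imsetP [k' _ ->].
  apply/implyP => ne; apply/forallP => i; apply: hF.
  by apply: contraNneq ne => ->.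
rewrite /per (bigD1 D0) //=.
apply: (@lt_le_trans _ _ (\prod_(a in D0) A a)).
  by apply: prodr_gt0 => a /imsetP [k _ ->].
rewrite lerDl; apply: sumr_ge0 => D _; apply: prodr_ge0 => a _; exact: hA.
Qed.

End PP.

Unset Implicit Arguments.
Local Open Scope ring_scope.

Theorem mainTheorem12 (R : realFieldType) (d : nat) (hd : (3 <= d)%N)
    (B B' : idx d -> R) (lam : R) (hlam0 : 0 < lam) (hlam1 : lam < 1)
    (hB : equivalent (@M4 R d) B) (hB' : equivalent (@M4 R d) B')
    (E E' : {ffun 'I_d -> 'I_3})
    (mu mu' : {ffun 'I_d -> bool} -> bool) (s s' : bool)
    (hBp : forall a, B a = block_perm R E mu s a)
    (hBp' : forall a, B' a = block_perm R E' mu' s' a)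
    (htess : forall y y' : {ffun 'I_d -> bool},
        filled s y -> filled s' y' -> subcube E y :&: subcube E' y' = set0) :
  0 < per (fun a => lam * B a + (1 - lam) * B' a).
Proof.
have oddw : forall (E0 : {ffun 'I_d -> 'I_3}) (a : idx d),
    odd (weight (pvec E0 a)) = \big[addb/false]_(i < d) pmap (E0 i) (a i).
  by move=> E0 a; rewrite odd_weight; apply: eq_bigr => i _; rewrite ffunE.
have contr : forall a : idx d, \big[addb/false]_(i < d) pmap (E i) (a i) = s ->
    \big[addb/false]_(i < d) pmap (E' i) (a i) = s' -> False.
  move=> a h1 h2.
  have := htess (pvec E a) (pvec E' a); rewrite /filled !oddw h1 h2 !eqxx => /(_ isT isT).
  move/setP/(_ a); rewrite !inE.
  have -> : [forall i, pmap (E i) (a i) == pvec E a i] by apply/forallP => i; rewrite ffunE.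
  have -> // : [forall i, pmap (E' i) (a i) == pvec E' a i] by apply/forallP => i; rewrite ffunE.
have single : forall (E0 : {ffun 'I_d -> 'I_3}) (i : 'I_d) (x : 'I_4),
    \big[addb/false]_(k < d) pmap (E0 k) ([ffun k => if k == i then x else ord0] k) = pmap (E0 i) x.
  move=> E0 i x; rewrite (bigD1 i) //= ffunE eqxx big1 ?addbF // => k /negbTE hk.
  by rewrite ffunE hk pmap0.
have hE : forall i, E' i = E i.
  move=> i; apply/eqP; rewrite eq_sym; apply/negPn/negP => ne.
  have [x [h1 h2]] := @choose_x (E i) (E' i) s s' (introT orP (or_introl ne)).
  by apply: (contr [ffun k => if k == i then x else ord0]); rewrite single.
have d0 : (0 < d)%N by apply: leq_trans hd.
have hs : s' = ~~ s.
  apply/eqP; apply/negPn/negP => ne.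
  have ss : s == s' by move: ne; move: (s) (s') => [] [].
  have [x [h1 h2]] := @choose_x (E (Ordinal d0)) (E (Ordinal d0)) s s' (introT orP (or_intror ss)).
  apply: (contr [ffun k => if k == Ordinal d0 then x else ord0]); rewrite single //.
  by rewrite hE.
pose c (y : {ffun 'I_d -> bool}) := if odd (weight y) == s then mu y else mu' y.
have good : forall a : idx d, \big[addb/false]_(i < d) mumap (E i) (a i) = c (pvec E a) ->
    0 < lam * B a + (1 - lam) * B' a.
  move=> a ha.
  have B'0 : 0 <= B' a by rewrite hBp' /block_perm; case: ifP.
  have B0 : 0 <= B a by rewrite hBp /block_perm; case: ifP.
  have l1 : 0 < 1 - lam by rewrite subr_gt0.
  move: ha; rewrite /c oddw; case hf: (_ == s) => ha.
  - have -> : B a = 1 by rewrite hBp /block_perm hf ha addbb.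
    rewrite mulr1; apply: (@lt_le_trans _ _ lam) => //.
    by rewrite lerDl mulr_ge0 // ltW.
  - have -> : B' a = 1.
      rewrite hBp' /block_perm.
      have -> : \big[addb/false]_(i < d) pmap (E' i) (a i) = \big[addb/false]_(i < d) pmap (E i) (a i).
        by apply: eq_bigr => i _; rewrite hE.
      have -> : \big[addb/false]_(i < d) mumap (E' i) (a i) = \big[addb/false]_(i < d) mumap (E i) (a i).
        by apply: eq_bigr => i _; rewrite hE.
      have -> : pvec E' a = pvec E a by apply/ffunP => i; rewrite !ffunE hE.
      by rewrite hs ha addbb eqxx andbT; move: hf; move: (\big[addb/false]_(i < d) _) (s) => [] [].
    rewrite mulr1; apply: (@lt_le_trans _ _ (1 - lam)) => //.
    by rewrite lerDr mulr_ge0 // ltW.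
have nonneg : forall a : idx d, 0 <= lam * B a + (1 - lam) * B' a.
  move=> a; have B'0 : 0 <= B' a by rewrite hBp' /block_perm; case: ifP.
  have B0 : 0 <= B a by rewrite hBp /block_perm; case: ifP.
  by rewrite addr_ge0 // mulr_ge0 // ltW // subr_gt0.
pose i0 : 'I_d := Ordinal d0.
have d1 : (1 < d)%N by apply: leq_trans hd.
have d2 : (2 < d)%N by [].
pose i1 : 'I_d := Ordinal d1.
pose i2 : 'I_d := Ordinal d2.
pose u : {ffun 'I_d -> bool} := [ffun => false].
pose w : {ffun 'I_d -> bool} := [ffun i => i == i0].
pose w' : {ffun 'I_d -> bool} := [ffun i => i == i1].
pose P (y0 y2 : {ffun 'I_d -> bool}) := addb (addb (addb (c y0) (c (negv y0))) (c y2)) (c (negv y2)).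
have hP : addb (addb (P u w) (P u w')) (P w w') = false.
  rewrite /P; move: (c u) (c (negv u)) (c w) (c (negv w)) (c w') (c (negv w')).
  by move=> [] [] [] [] [] [].
have fin : forall (y0 y2 : {ffun 'I_d -> bool}) (j l : 'I_d), y0 j = y2 j -> y0 l != y2 l -> ~~ P y0 y2 ->
    0 < per (fun a => lam * B a + (1 - lam) * B' a).
  move=> y0 y2 j l h1 h2 h3.
  have [F [hF1 hF2]] := @config d E c y0 y2 j l h1 h2 h3.
  apply: (per_pos d0 hF1 nonneg) => k; exact: good.
case h1: (P u w).
  case h2: (P u w').
    case h3: (P w w'); first by rewrite h1 h2 h3 in hP.
    by apply: (fin w w' i2 i0); rewrite ?h3 // !ffunE.
  by apply: (fin u w' i0 i1); rewrite ?h2 // !ffunE.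
by apply: (fin u w i1 i0); rewrite ?h1 // !ffunE.
Qed.
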